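(* Let $n\ge 4$ be an even integer and let $k\ge 3$ and $m\ge 2$ be integers. Then the metric dimension of $(C_n\square P_k)\square P_m$ is $4$.
   Context: All graphs are finite and connected; $d(u,v)$ is the shortest-path distance. $C_n$ is the cycle on $n$ vertices and $P_k$ the path on $k$ vertices. The cartesian product $G\square H$ has vertex set $V(G)\times V(H)$, with $(g_1,h_1)$ adjacent to $(g_2,h_2)$ iff either $h_1=h_2$ and $g_1g_2\in E(G)$, or $g_1=g_2$ and $h_1h_2\in E(H)$. For an ordered set $Q=\{q_1,\dots,q_l\}$ of vertices, $r(x|Q)=(d(x,q_1),\dots,d(x,q_l))$. $Q$ is a resolving set of $G$ if any two distinct vertices of $G$ have distinct vectors $r(\cdot|Q)$; the metric dimension is the minimum size of a resolving set. *)

(* Defs.v *)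
From mathcomp Require Import all_boot.
Set Implicit Arguments. Unset Strict Implicit. Unset Printing Implicit Defensive.

Definition cycle_rel (n : nat) : rel 'I_n :=
  fun i j => (j == (i.+1 %% n) :> nat) || (i == (j.+1 %% n) :> nat).

Definition path_rel (k : nat) : rel 'I_k :=
  fun i j => (j == i.+1 :> nat) || (i == j.+1 :> nat).

Definition cart_rel (T1 T2 : finType) (e1 : rel T1) (e2 : rel T2) : rel (T1 * T2) :=
  fun x y => ((x.2 == y.2) && e1 x.1 y.1) || ((x.1 == y.1) && e2 x.2 y.2).

Definition walk_of_len (T : finType) (e : rel T) (x y : T) (d : nat) : bool :=
  [exists p : d.-tuple T, path e x p && (last x p == y)].

(* In a connected graph such d exists and is < #|T|; (the value #|T| is
   returned only for unreachable pairs, which do not occur here). *)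
Definition dist (T : finType) (e : rel T) (x y : T) : nat :=
  find (walk_of_len e x y) (iota 0 #|T|).

(* r(x|Q) for the ordered set Q (listed in enum order) *)
Definition rvec (T : finType) (e : rel T) (Q : {set T}) (x : T) : seq nat :=
  [seq dist e x q | q <- enum Q].

Definition resolving (T : finType) (e : rel T) (Q : {set T}) : bool :=
  [forall x, forall y, (rvec e Q x == rvec e Q y) ==> (x == y)].

Definition metric_dim (T : finType) (e : rel T) : nat :=
  \big[minn/#|T|]_(Q : {set T} | resolving e Q) #|Q|.
Arguments cycle_rel n : clear implicits.
Arguments path_rel k : clear implicits.

(* Main.v *)
Require Import Defs.
From mathcomp Require Import all_boot zify.
Set Implicit Arguments. Unset Strict Implicit. Unset Printing Implicit Defensive.


Definition metricF (T : finType) (e : rel T) (F : T -> T -> nat) :=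
  [/\ forall x y, F x y = 0 -> x = y,
      forall x, F x x = 0,
      forall x x' z, e x x' -> F x z <= (F x' z).+1 &
      forall x z, 0 < F x z -> exists x', e x x' /\ F x z = (F x' z).+1].

Lemma find_iota_eq (P : pred nat) N i :
  i < N -> P i -> (forall j, j < i -> ~~ P j) -> find P (iota 0 N) = i.
Proof.
move=> iN Pi Hj.
have hasP : has P (iota 0 N).
  by apply/hasP; exists i => //; rewrite mem_iota.
have fs : find P (iota 0 N) < N by rewrite -{2}(size_iota 0 N) -has_find.
case: (ltngtP (find P (iota 0 N)) i) => // H.
- have := nth_find 0 hasP. rewrite nth_iota //.
  by rewrite add0n => Pf; move: (Hj _ H); rewrite Pf.
- have := before_find 0 H. by rewrite nth_iota // add0n Pi.
Qed.

Lemma walk_ge (T : finType) (e : rel T) F x y d :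
  metricF e F -> walk_of_len e x y d -> F x y <= d.
Proof.
case=> _ F0 Flip _ /existsP [p /andP [pp /eqP lp]].
have : size p = d by rewrite size_tuple.
move=> <-; elim: (tval p) x pp lp => [|z s IH] x /=.
  by move=> _ ->; rewrite F0.
move=> /andP [exz ps] lz.
by apply: leq_trans (Flip _ _ _ exz) _; rewrite ltnS IH.
Qed.

Lemma walk_ex (T : finType) (e : rel T) F y d :
  metricF e F -> forall x, F x y = d -> walk_of_len e x y d.
Proof.
case=> F0 _ _ Fd; elim: d => [|d IH] x Hx.
  apply/existsP; exists (in_tuple [::]); by rewrite /= (F0 _ _ Hx).
have [x' [ex' Hx']] : exists x', e x x' /\ F x y = (F x' y).+1 by apply: Fd; rewrite Hx.
have /existsP [p /andP [pp lp]] := IH x' (congr1 predn (etrans (esym Hx') Hx)).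
apply/existsP; exists [tuple of x' :: p]; by rewrite /= ex' pp.
Qed.

Lemma dist_eqF (T : finType) (e : rel T) F x y :
  metricF e F -> F x y < #|T| -> dist e x y = F x y.
Proof.
move=> HF Hb; rewrite /dist; apply: (find_iota_eq Hb).
  exact: (walk_ex HF (erefl (F x y))).
move=> j jlt; apply/negP => /(walk_ge HF); by rewrite leqNgt jlt.
Qed.

Definition prodF (T1 T2 : finType) (F1 : T1 -> T1 -> nat) (F2 : T2 -> T2 -> nat) :=
  fun x y : T1 * T2 => F1 x.1 y.1 + F2 x.2 y.2.

Lemma metricF_prod (T1 T2 : finType) (e1 : rel T1) (e2 : rel T2) F1 F2 :
  metricF e1 F1 -> metricF e2 F2 -> metricF (cart_rel e1 e2) (prodF F1 F2).
Proof.
case=> A0 A1 A2 A3 [B0 B1 B2 B3]; split.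
- move=> [x1 x2] [y1 y2]; rewrite /prodF /= => H.
  have h1 : F1 x1 y1 = 0 by move: H; case: (F1 x1 y1).
  have h2 : F2 x2 y2 = 0 by move: H; rewrite h1.
  by rewrite (A0 _ _ h1) (B0 _ _ h2).
- by move=> x; rewrite /prodF A1 B1.
- move=> [x1 x2] [y1 y2] [z1 z2]; rewrite /cart_rel /prodF /=.
  case/orP => /andP [/eqP <- H].
    by have := A2 _ _ z1 H; lia.
  by have := B2 _ _ z2 H; lia.
- move=> [x1 x2] [z1 z2]; rewrite /prodF /= => H.
  case: (posnP (F1 x1 z1)) => H1.
    have [x' [ex Hx]] : exists x', e2 x2 x' /\ F2 x2 z2 = (F2 x' z2).+1 by apply: B3; lia.
    exists (x1, x'); rewrite /cart_rel /= eqxx ex orbT; split => //; lia.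
  have [x' [ex Hx]] := A3 _ _ H1.
  exists (x', x2); rewrite /cart_rel /= eqxx ex; split => //; lia.
Qed.


Definition absd (a b : nat) := (a - b) + (b - a).
Definition dC (n a b : nat) := minn (absd a b) (n - absd a b).

Lemma metricF_path k : metricF (path_rel k) (fun x y : 'I_k => absd x y).
Proof.
split.
- move=> x y H; apply: val_inj => /=; move: H; rewrite /absd; lia.
- move=> x; rewrite /absd; lia.
- move=> x x' z; rewrite /path_rel /absd => /orP [] /eqP H; lia.
- move=> x z; rewrite /absd => H.
  case: (ltngtP x z) => Hxz.
  + have Hl : x.+1 < k by apply: leq_trans (ltn_ord z).
    exists (Ordinal Hl); rewrite /path_rel /= eqxx; split => //; lia.
  + have Hl : x.-1 < k by apply: leq_ltn_trans (leq_pred _) (ltn_ord x).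
    exists (Ordinal Hl); rewrite /path_rel /=; split; last lia.
    apply/orP; right; apply/eqP; lia.
  + move: H; rewrite Hxz; lia.
Qed.

Lemma succ_mod n x : x < n -> x.+1 %% n = if x.+1 < n then x.+1 else 0.
Proof.
move=> xn; case: ifP => H; first by rewrite modn_small.
have -> : x.+1 = n by lia.
by rewrite modnn.
Qed.

Lemma metricF_cycle n : 3 <= n -> metricF (cycle_rel n) (fun x y : 'I_n => dC n x y).
Proof.
move=> n3; split.
- move=> x y H; apply: val_inj => /=; move: H (ltn_ord x) (ltn_ord y); rewrite /dC /absd; lia.
- move=> x; rewrite /dC /absd; lia.
- move=> x x' z; rewrite /cycle_rel.
  have := ltn_ord x; have := ltn_ord x'; have := ltn_ord z.
  rewrite (succ_mod (ltn_ord x)) (succ_mod (ltn_ord x')) /dC /absd.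
  move=> ? ? ?.
  case: ifP => ?; case: ifP => ? /orP [] /eqP H; lia.
- move=> x z /= H; have xn := ltn_ord x; have zn := ltn_ord z; move: H; rewrite /dC /absd => H.
  have Hs : (if x.+1 < n then x.+1 else 0) < n by case: ifP; lia.
  have Hp : (if 0 < x then x.-1 else n.-1) < n by case: ifP; lia.
  have es : cycle_rel n x (Ordinal Hs).
    by rewrite /cycle_rel /= succ_mod // eqxx.
  have ep : cycle_rel n x (Ordinal Hp).
    rewrite /cycle_rel /=; apply/orP; right; apply/eqP; case: ifP => H0.
    - by rewrite prednK // modn_small.
    - have -> : n.-1.+1 = n by lia.
      rewrite modnn; lia.
  case: (ltngtP x z) => Hxz.
  + case: (leqP (z - x) (n - (z - x))) => Hd.
    * exists (Ordinal Hs); split => //=; case: ifP => ?; lia.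
    * exists (Ordinal Hp); split => //=; case: ifP => ?; lia.
  + case: (leqP (x - z) (n - (x - z))) => Hd.
    * exists (Ordinal Hp); split => //=; case: ifP => ?; lia.
    * exists (Ordinal Hs); split => //=; case: ifP => ?; lia.
  + move: H; rewrite Hxz; lia.
Qed.


Definition sn n a := if a.+1 < n then a.+1 else 0.
Definition pn n a := if 0 < a then a.-1 else n.-1.
Definition ah n h a := if a + h < n then a + h else a - h.
Definition inc n a al := dC n (sn n a) al == (dC n a al).+1.

Ltac cyc := rewrite /sn /pn /ah /dC /absd; repeat (case: ifP => ?); lia.

Lemma sn_lt n a : a < n -> sn n a < n.   Proof. move=> ?; rewrite /sn; case: ifP; lia. Qed.
Lemma pn_lt n a : a < n -> pn n a < n.   Proof. move=> ?; rewrite /pn; case: ifP; lia. Qed.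
Lemma ah_lt n h a : n = h + h -> a < n -> ah n h a < n.   Proof. move=> ? ?; rewrite /ah; case: ifP; lia. Qed.

Lemma step n h a al : n = h + h -> 2 <= h -> a < n -> al < n ->
  dC n (sn n a) al = (dC n a al).+1 \/ dC n a al = (dC n (sn n a) al).+1.
Proof. move=> *; cyc. Qed.

Lemma dC_ah n h a al : n = h + h -> 2 <= h -> a < n -> al < n ->
  dC n (ah n h a) al = h - dC n a al.
Proof. move=> *; cyc. Qed.

Lemma dC_ah2 n h a al : n = h + h -> 2 <= h -> a < n -> al < n ->
  dC n a (ah n h al) = h - dC n a al.
Proof. move=> *; cyc. Qed.

Lemma dC_le n h a al : n = h + h -> 2 <= h -> a < n -> al < n -> dC n a al <= h.
Proof. move=> *; cyc. Qed.

Lemma sn_ah n h a : n = h + h -> 2 <= h -> a < n -> sn n (ah n h a) = ah n h (sn n a).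
Proof.
move=> *; rewrite /ah /sn; case H1: (a + h < n); case H2: (a.+1 < n);
 repeat (case: ifP => ?); lia.
Qed.

Definition sr n h al be := (be == al) || (be == ah n h al).

Section L.
Variables (n h : nat) (Hn : n = h + h) (Hh : 2 <= h).

Lemma inc_ah a al : a < n -> al < n -> inc n (ah n h a) al = ~~ inc n a al.
Proof.
move=> an aln; rewrite /inc sn_ah // !dC_ah // ?sn_lt //.
have := step Hn Hh an aln; have := dC_le Hn Hh (sn_lt an) aln; have := dC_le Hn Hh an aln.
by case: eqP => ?; case: eqP => ? //=; lia.
Qed.

Lemma inc_ah2 a al : a < n -> al < n -> inc n a (ah n h al) = ~~ inc n a al.
Proof.
move=> an aln; rewrite /inc !dC_ah2 // ?sn_lt //.
have := step Hn Hh an aln; have := dC_le Hn Hh (sn_lt an) aln; have := dC_le Hn Hh an aln.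
by case: eqP => ?; case: eqP => ? //=; lia.
Qed.

Lemma inc_self al : al < n -> inc n al al.
Proof. move=> ?; rewrite /inc; apply/eqP; cyc. Qed.

Lemma inc_step a al : a < n -> al < n ->
  if inc n a al then dC n (sn n a) al = (dC n a al).+1 else dC n a al = (dC n (sn n a) al).+1.
Proof.
move=> an aln; rewrite /inc; have := step Hn Hh an aln.
by case: eqP => // ? [].
Qed.

Lemma inc_char a al : a < n -> al < n ->
  inc n a al = if al <= a then a - al < h else h < al - a.
Proof.
move=> an aln; rewrite /inc; case: ifP => H; apply/idP/idP.
all: try (move/eqP; move: H; cyc).
all: by move=> ?; apply/eqP; move: H; cyc.
Qed.

Lemma inc_swap al be : al < n -> be < n -> ~~ sr n h al be -> inc n al be = ~~ inc n be al.
Proof.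
move=> an bn; rewrite /sr negb_or => /andP [/eqP H1 /eqP H2].
rewrite !inc_char //.
move: H2; rewrite /ah; case: ifP => H3 H2.
all: by case: ifP => ?; case: ifP => ?; case: ltnP => ?; case: ltnP => ? //=; lia.
Qed.

Lemma sr_sym al be : al < n -> be < n -> sr n h al be = sr n h be al.
Proof.
move=> an bn; rewrite /sr /ah.
by case: (al =P be) => [->|?]; [rewrite eqxx | case: ifP => ?; case: ifP => ?; case: eqP => ?; case: eqP => ? //=; lia].
Qed.

Lemma sn_pn a : a < n -> sn n (pn n a) = a.
Proof. move=> ?; rewrite /sn /pn; case: (posnP a) => H /=; case: ifP => ?; lia. Qed.

Lemma refl_base a0 : a0 < n ->
  [/\ dC n (sn n a0) a0 = dC n (pn n a0) a0,
      dC n (sn n a0) (ah n h a0) = dC n (pn n a0) (ah n h a0) &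
      sn n a0 != pn n a0].
Proof.
move=> an.
have E1 : dC n (sn n a0) a0 = dC n (pn n a0) a0 by rewrite /sn /pn /dC /absd; case: ifP => ?; case: ifP => ?; lia.
have pa := pn_lt an.
split => //.
- by rewrite !(dC_ah2 Hn Hh) ?sn_lt ?pn_lt // E1.
- apply/eqP; rewrite /sn /pn; case: ifP => ?; case: ifP => ?; lia.
Qed.

Lemma refl_cyc a0 a3 : a0 < n -> a3 < n -> ~~ sr n h a0 a3 ->
  [/\ dC n (sn n a0) a0 = dC n (pn n a0) a0,
      dC n (sn n a0) (ah n h a0) = dC n (pn n a0) (ah n h a0),
      sn n a0 != pn n a0 &
      (dC n (sn n a0) a3 = dC n (pn n a0) a3 + 2 \/ dC n (pn n a0) a3 = dC n (sn n a0) a3 + 2)].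
Proof.
move=> an bn Hs.
have E1 : dC n (sn n a0) a0 = dC n (pn n a0) a0 by rewrite /sn /pn /dC /absd; case: ifP => ?; case: ifP => ?; lia.
have pa := pn_lt an.
split => //.
- by rewrite !(dC_ah2 Hn Hh) ?sn_lt ?pn_lt // E1.
- apply/eqP; rewrite /sn /pn; case: ifP => ?; case: ifP => ?; lia.
have Hi : inc n (pn n a0) a3 = inc n a0 a3.
  move: Hs; rewrite /sr negb_or => /andP [/eqP H1 /eqP H2].
  have Hp : (0 < a0 /\ pn n a0 = a0.-1) \/ (a0 = 0 /\ pn n a0 = n.-1).
    by rewrite /pn; case: (posnP a0) => ?; [right|left].
  move: H2 Hp; rewrite !inc_char //; move: (pn n a0) pa => p pa.
  rewrite /ah; case: ifP => H3 H2 Hp.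
  all: repeat (case: ifP => ?). all: try (apply/idP/idP => ?; lia).

have S1 := inc_step an bn; have S2 := inc_step pa bn.
rewrite sn_pn // Hi in S2.
by case: (inc n a0 a3) S1 S2 => S1 S2; [left|right]; lia.
Qed.
End L.


Definition GG n (x q : nat * nat * nat) := dC n x.1.1 q.1.1 + absd x.1.2 q.1.2 + absd x.2 q.2.
Definition inb n k m (x : nat * nat * nat) := [&& x.1.1 < n, x.1.2 < k & x.2 < m].
Definition TW n k m (s : seq (nat * nat * nat)) :=
  exists x y, inb n k m x /\ inb n k m y /\ x <> y /\ forall q, q \in s -> GG n x q = GG n y q.

Definition neg3 (P : bool * bool * bool) := (~~ P.1.1, ~~ P.1.2, ~~ P.2).
Definition eqc (P Q : bool * bool * bool) := (P == Q) || (P == neg3 Q).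

Lemma TW_sub n k m s s' : {subset s' <= s} -> TW n k m s -> TW n k m s'.
Proof. move=> sub [x [y [? [? [? H]]]]]; exists x, y; do 3 (split => //); move=> q /sub; exact: H. Qed.

Section T.
Variables (n h k m : nat) (Hn : n = h + h) (Hh : 2 <= h) (Hk : 3 <= k) (Hm : 2 <= m).
Variables (q1 q2 q3 : nat * nat * nat).
Hypotheses (B1 : inb n k m q1) (B2 : inb n k m q2) (B3 : inb n k m q3).

Let s := [:: q1; q2; q3].

Lemma allq (P : nat * nat * nat -> Prop) : P q1 -> P q2 -> P q3 -> forall q, q \in s -> P q.
Proof. by move=> ? ? ? q; rewrite !inE => /or3P [] /eqP ->. Qed.

Lemma inbs q : q \in s -> inb n k m q.
Proof. exact: (allq (P := fun q => inb n k m q) B1 B2 B3 (q := q)). Qed.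

Definition cp a := (inc n a q1.1.1, inc n a q2.1.1, inc n a q3.1.1).
Definition bp b := (q1.1.2 <= b, q2.1.2 <= b, q3.1.2 <= b).
Definition gp c := (q1.2 <= c, q2.2 <= c, q3.2 <= c).

Lemma T1 a b c : a < n -> b.+1 < k -> c < m ->
  (forall q, q \in s -> inc n a q.1.1 = (q.1.2 <= b)) -> TW n k m s.
Proof.
move=> an bk cm H; exists (a, b.+1, c), (sn n a, b, c).
split; first by apply/and3P; split => /=; try apply: sn_lt; lia.
split; first by apply/and3P; split => /=; try apply: sn_lt; lia.
split; first by case; lia.
move=> q qs; have := H q qs; have /and3P [qa qb qc] := inbs qs.
have := inc_step Hn Hh an qa; rewrite /GG /absd /=.
by case: (inc n a q.1.1) => St; [move/esym => E | move/esym/negbT => E]; lia.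
Qed.

Lemma T1n a b c : a < n -> b.+1 < k -> c < m ->
  (forall q, q \in s -> inc n a q.1.1 = ~~ (q.1.2 <= b)) -> TW n k m s.
Proof.
move=> an bk cm H; apply: (T1 (a := ah n h a)) (bk) (cm) _; first exact: ah_lt.
move=> q qs; have /and3P [qa _ _] := inbs qs.
by rewrite inc_ah // H // negbK.
Qed.

Lemma T2 a b c : a < n -> b < k -> c.+1 < m ->
  (forall q, q \in s -> inc n a q.1.1 = (q.2 <= c)) -> TW n k m s.
Proof.
move=> an bk cm H; exists (a, b, c.+1), (sn n a, b, c).
split; first by apply/and3P; split => /=; try apply: sn_lt; lia.
split; first by apply/and3P; split => /=; try apply: sn_lt; lia.
split; first by case; lia.
move=> q qs; have := H q qs; have /and3P [qa qb qc] := inbs qs.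
have := inc_step Hn Hh an qa; rewrite /GG /absd /=.
by case: (inc n a q.1.1) => St; [move/esym => E | move/esym/negbT => E]; lia.
Qed.

Lemma T2n a b c : a < n -> b < k -> c.+1 < m ->
  (forall q, q \in s -> inc n a q.1.1 = ~~ (q.2 <= c)) -> TW n k m s.
Proof.
move=> an bk cm H; apply: (T2 (a := ah n h a)) (bk) (cm) _; first exact: ah_lt.
move=> q qs; have /and3P [qa _ _] := inbs qs.
by rewrite inc_ah // H // negbK.
Qed.

Lemma T3 b c : b.+1 < k -> c.+1 < m ->
  (forall q, q \in s -> (q.1.2 <= b) = (q.2 <= c)) -> TW n k m s.
Proof.
move=> bk cm H; exists (0, b.+1, c), (0, b, c.+1).
split; first by apply/and3P; split => /=; try apply: sn_lt; lia.
split; first by apply/and3P; split => /=; try apply: sn_lt; lia.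
split; first by case; lia.
move=> q qs; have := H q qs; rewrite /GG /absd /=.
by case: ltnP => ?; case: ltnP => ? //=; lia.
Qed.

Lemma T3n b c : b.+1 < k -> c.+1 < m ->
  (forall q, q \in s -> (q.1.2 <= b) = ~~ (q.2 <= c)) -> TW n k m s.
Proof.
move=> bk cm H; exists (0, b, c), (0, b.+1, c.+1).
split; first by apply/and3P; split => /=; try apply: sn_lt; lia.
split; first by apply/and3P; split => /=; try apply: sn_lt; lia.
split; first by case; lia.
move=> q qs; have := H q qs; rewrite /GG /absd /=.
by case: ltnP => ?; case: ltnP => ? //=; lia.
Qed.

Lemma eqc_cases (P Q : bool * bool * bool) : eqc P Q ->
  (P.1.1 = Q.1.1 /\ P.1.2 = Q.1.2 /\ P.2 = Q.2) \/
  (P.1.1 = ~~ Q.1.1 /\ P.1.2 = ~~ Q.1.2 /\ P.2 = ~~ Q.2).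
Proof. by case: P Q => [[? ?] ?] [[? ?] ?]; rewrite /eqc /neg3 /= => /orP [] /eqP [-> -> ->]; [left|right]. Qed.

Lemma T1c a b : a < n -> b.+1 < k -> eqc (cp a) (bp b) -> TW n k m s.
Proof.
move=> an bk /eqc_cases [[E1 [E2 E3]]|[E1 [E2 E3]]].
- by apply: (T1 an bk (c := 0)); [lia | apply: allq].
- by apply: (T1n an bk (c := 0)); [lia | apply: allq].
Qed.

Lemma T2c a c : a < n -> c.+1 < m -> eqc (cp a) (gp c) -> TW n k m s.
Proof.
move=> an cm /eqc_cases [[E1 [E2 E3]]|[E1 [E2 E3]]].
- by apply: (T2 an (b := 0) _ cm); [lia | apply: allq].
- by apply: (T2n an (b := 0) _ cm); [lia | apply: allq].
Qed.

Lemma T3c b c : b.+1 < k -> c.+1 < m -> eqc (bp b) (gp c) -> TW n k m s.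
Proof.
move=> bk cm /eqc_cases [[E1 [E2 E3]]|[E1 [E2 E3]]].
- by apply: (T3 bk cm); apply: allq.
- by apply: (T3n bk cm); apply: allq.
Qed.


Definition Gr (u : nat * nat) (q : nat * nat * nat) := absd u.1 q.1.2 + absd u.2 q.2.

Lemma Rgen xa ya (u v : nat * nat) : xa < n -> ya < n -> u.1 < k -> u.2 < m -> v.1 < k -> v.2 < m ->
  (xa, u) <> (ya, v) ->
  dC n xa q1.1.1 = dC n ya q1.1.1 -> dC n xa q2.1.1 = dC n ya q2.1.1 ->
  Gr u q1 = Gr v q1 -> Gr u q2 = Gr v q2 ->
  dC n xa q3.1.1 + Gr u q3 = dC n ya q3.1.1 + Gr v q3 -> TW n k m s.
Proof.
move=> xn yn u1 u2 v1 v2 ne D1 D2 G1 G2 G3.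
exists (xa, u.1, u.2), (ya, v.1, v.2).
split; first by apply/and3P.
split; first by apply/and3P.
split; first by case: u v ne {G1 G2 G3 u1 u2 v1 v2} => ? ? [? ?] /= ne [] ? ? ?; apply: ne; congr (_, (_, _)).
apply: allq; rewrite /GG /=; move: G1 G2 G3; rewrite /Gr; lia.
Qed.

Lemma sr_dC a0 al x y : a0 < n -> sr n h a0 al ->
  dC n x a0 = dC n y a0 -> dC n x (ah n h a0) = dC n y (ah n h a0) -> dC n x al = dC n y al.
Proof. by move=> _ /orP [] /eqP ->. Qed.

Lemma Rlem a0 (u v : nat * nat) : a0 < n -> u.1 < k -> u.2 < m -> v.1 < k -> v.2 < m -> u <> v ->
  sr n h a0 q1.1.1 -> sr n h a0 q2.1.1 -> ~~ sr n h a0 q3.1.1 ->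
  Gr u q1 = Gr v q1 -> Gr u q2 = Gr v q2 ->
  Gr u q3 = Gr v q3 \/ Gr u q3 = Gr v q3 + 2 \/ Gr v q3 = Gr u q3 + 2 -> TW n k m s.
Proof.
move=> an u1 u2 v1 v2 ne S1 S2 S3 G1 G2 G3.
have /and3P [a1 _ _] := B1; have /and3P [a2 _ _] := B2; have /and3P [a3 _ _] := B3.
have [E1 E2 Ne] := refl_base Hn Hh an.
have [_ _ _ D] := refl_cyc Hn Hh an a3 S3.
have sa := sn_lt an; have pa := pn_lt an.
case: G3 => [G3|[G3|G3]].
- apply: (Rgen an an u1 u2 v1 v2) => //; first by case.
  by rewrite G3.
- case: D => D.
  + apply: (Rgen pa sa u1 u2 v1 v2) => //.
    * by case => E; move: Ne; rewrite E eqxx.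
    * by apply: (sr_dC an S1).
    * by apply: (sr_dC an S2).
    * lia.
  + apply: (Rgen sa pa u1 u2 v1 v2) => //.
    * by case => E; move: Ne; rewrite E eqxx.
    * by apply: (sr_dC an S1).
    * by apply: (sr_dC an S2).
    * lia.
- case: D => D.
  + apply: (Rgen sa pa u1 u2 v1 v2) => //.
    * by case => E; move: Ne; rewrite E eqxx.
    * by apply: (sr_dC an S1).
    * by apply: (sr_dC an S2).
    * lia.
  + apply: (Rgen pa sa u1 u2 v1 v2) => //.
    * by case => E; move: Ne; rewrite E eqxx.
    * by apply: (sr_dC an S1).
    * by apply: (sr_dC an S2).
    * lia.
Qed.

Lemma caseC : sr n h q1.1.1 q2.1.1 -> sr n h q1.1.1 q3.1.1 -> TW n k m s.
Proof.
move=> S2 S3.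
have /and3P [a1 _ _] := B1.
have [E1 E2 Ne] := refl_base Hn Hh a1.
have S1 : sr n h q1.1.1 q1.1.1 by rewrite /sr eqxx.
exists (sn n q1.1.1, 0, 0), (pn n q1.1.1, 0, 0).
split; first by apply/and3P; split => /=; try apply: sn_lt; lia.
split; first by apply/and3P; split => /=; try apply: pn_lt; lia.
split; first by case => E; move: Ne; rewrite E eqxx.
apply: allq; rewrite /GG /=; congr (_ + _ + _); exact: (sr_dC a1).
Qed.

Lemma boolA (p12 p13 p23 : bool) (B G : bool * bool * bool) :
  [|| eqc (true, p12, p13) B, eqc (~~ p12, true, p23) B, eqc (~~ p13, ~~ p23, true) B,
      eqc (true, p12, p13) G, eqc (~~ p12, true, p23) G, eqc (~~ p13, ~~ p23, true) G | eqc B G].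
Proof. by case: p12 p13 p23 B G => [] [] [] [[[] []] []] [[[] []] []]. Qed.

Lemma caseA : ~~ sr n h q1.1.1 q2.1.1 -> ~~ sr n h q1.1.1 q3.1.1 -> ~~ sr n h q2.1.1 q3.1.1 -> TW n k m s.
Proof.
move=> S12 S13 S23.
have /and3P [a1 _ _] := B1; have /and3P [a2 _ _] := B2; have /and3P [a3 _ _] := B3.
have C1 : cp q1.1.1 = (true, inc n q1.1.1 q2.1.1, inc n q1.1.1 q3.1.1) by rewrite /cp (inc_self Hn Hh a1).
have C2 : cp q2.1.1 = (~~ inc n q1.1.1 q2.1.1, true, inc n q2.1.1 q3.1.1).
  by rewrite /cp (inc_self Hn Hh a2) (inc_swap Hn Hh a1 a2 S12) negbK.
have C3 : cp q3.1.1 = (~~ inc n q1.1.1 q3.1.1, ~~ inc n q2.1.1 q3.1.1, true).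
  by rewrite /cp (inc_self Hn Hh a3) (inc_swap Hn Hh a1 a3 S13) (inc_swap Hn Hh a2 a3 S23) !negbK.
have k0 : 0 < k.-1 by lia.
have b0 : 1 < k by lia.
have c0 : 1 < m by lia.
have := boolA (inc n q1.1.1 q2.1.1) (inc n q1.1.1 q3.1.1) (inc n q2.1.1 q3.1.1) (bp 0) (gp 0).
rewrite -C1 -C2 -C3.
case/or4P => [H|H|H|/or4P [H|H|H|H]].
- exact: (T1c a1 b0 H).
- exact: (T1c a2 b0 H).
- exact: (T1c a3 b0 H).
- exact: (T2c a1 c0 H).
- exact: (T2c a2 c0 H).
- exact: (T2c a3 c0 H).
- exact: (T3c b0 c0 H).
Qed.

Lemma boolB1 (p x y : bool) : eqc (true, true, p) (x, x, y) || eqc (~~ p, ~~ p, true) (x, x, y).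
Proof. by case: p x y => [] [] []. Qed.

Lemma boolB2 (p x y : bool) : eqc (true, false, p) (x, ~~ x, y) || eqc (~~ p, p, true) (x, ~~ x, y).
Proof. by case: p x y => [] [] []. Qed.

Lemma caseB1 : q2.1.1 = q1.1.1 -> ~~ sr n h q1.1.1 q3.1.1 -> TW n k m s.
Proof.
move=> E S13.
have /and3P [a1 b1 c1] := B1; have /and3P [a2 b2 c2] := B2; have /and3P [a3 b3 c3] := B3.
have C1 : cp q1.1.1 = (true, true, inc n q1.1.1 q3.1.1) by rewrite /cp E (inc_self Hn Hh a1).
have C3 : cp q3.1.1 = (~~ inc n q1.1.1 q3.1.1, ~~ inc n q1.1.1 q3.1.1, true).
  by rewrite /cp E (inc_self Hn Hh a3) (inc_swap Hn Hh a1 a3 S13) !negbK.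
have TB b : b.+1 < k -> (q1.1.2 <= b) = (q2.1.2 <= b) -> TW n k m s.
  move=> bk Eb.
  have := boolB1 (inc n q1.1.1 q3.1.1) (q1.1.2 <= b) (q3.1.2 <= b).
  rewrite -C1 -C3 {2 4}Eb -/(bp b).
  by case/orP => H; [exact: (T1c a1 bk H) | exact: (T1c a3 bk H)].
have TG c : c.+1 < m -> (q1.2 <= c) = (q2.2 <= c) -> TW n k m s.
  move=> cm Ec.
  have := boolB1 (inc n q1.1.1 q3.1.1) (q1.2 <= c) (q3.2 <= c).
  rewrite -C1 -C3 {2 4}Ec -/(gp c).
  by case/orP => H; [exact: (T2c a1 cm H) | exact: (T2c a3 cm H)].
case: (boolP ((q1.1.2 <= 0) == (q2.1.2 <= 0))) => [/eqP|] Hb0; first by apply: (TB 0) => //; lia.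
case: (boolP ((q1.1.2 <= k.-2) == (q2.1.2 <= k.-2))) => [/eqP|] Hb1; first by apply: (TB k.-2) => //; lia.
case: (boolP ((q1.2 <= 0) == (q2.2 <= 0))) => [/eqP|] Hc0; first by apply: (TG 0) => //; lia.
case: (boolP ((q1.2 <= m.-2) == (q2.2 <= m.-2))) => [/eqP|] Hc1; first by apply: (TG m.-2) => //; lia.
have Hb : (q1.1.2 = 0 /\ q2.1.2 = k.-1) \/ (q1.1.2 = k.-1 /\ q2.1.2 = 0).
  by move: Hb0 Hb1; do 4 (case: leqP => ?) => //=; lia.
have Hc : (q1.2 = 0 /\ q2.2 = m.-1) \/ (q1.2 = m.-1 /\ q2.2 = 0).
  by move: Hc0 Hc1; do 4 (case: leqP => ?) => //=; lia.
have S1 : sr n h q1.1.1 q1.1.1 by rewrite /sr eqxx.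
have S2 : sr n h q1.1.1 q2.1.1 by rewrite /sr E eqxx.
have k1 : 0 < k.-1 by lia.
have m1 : 0 < m.-1 by lia.
have uv1 : ((0, 1) : nat * nat) <> (1, 0) by [].
have uv2 : ((0, 0) : nat * nat) <> (1, 1) by [].
case: Hb => [[Eb1 Eb2]|[Eb1 Eb2]]; case: Hc => [[Ec1 Ec2]|[Ec1 Ec2]].
- by apply: (Rlem (u := (0, 1)) (v := (1, 0)) a1) => //=; try lia; rewrite /Gr /absd /= ?Eb1 ?Eb2 ?Ec1 ?Ec2; lia.
- by apply: (Rlem (u := (0, 0)) (v := (1, 1)) a1) => //=; try lia; rewrite /Gr /absd /= ?Eb1 ?Eb2 ?Ec1 ?Ec2; lia.
- by apply: (Rlem (u := (0, 0)) (v := (1, 1)) a1) => //=; try lia; rewrite /Gr /absd /= ?Eb1 ?Eb2 ?Ec1 ?Ec2; lia.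
- by apply: (Rlem (u := (0, 1)) (v := (1, 0)) a1) => //=; try lia; rewrite /Gr /absd /= ?Eb1 ?Eb2 ?Ec1 ?Ec2; lia.
Qed.

Lemma caseB2 : q2.1.1 = ah n h q1.1.1 -> ~~ sr n h q1.1.1 q3.1.1 -> TW n k m s.
Proof.
move=> E S13.
have /and3P [a1 b1 c1] := B1; have /and3P [a2 b2 c2] := B2; have /and3P [a3 b3 c3] := B3.
have C1 : cp q1.1.1 = (true, false, inc n q1.1.1 q3.1.1).
  by rewrite /cp E (inc_ah2 Hn Hh a1 a1) (inc_self Hn Hh a1).
have C3 : cp q3.1.1 = (~~ inc n q1.1.1 q3.1.1, inc n q1.1.1 q3.1.1, true).
  by rewrite /cp E (inc_ah2 Hn Hh a3 a1) (inc_self Hn Hh a3) (inc_swap Hn Hh a1 a3 S13) !negbK.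
have TB b : b.+1 < k -> (q2.1.2 <= b) = ~~ (q1.1.2 <= b) -> TW n k m s.
  move=> bk Eb.
  have := boolB2 (inc n q1.1.1 q3.1.1) (q1.1.2 <= b) (q3.1.2 <= b).
  rewrite -C1 -C3 -Eb -/(bp b).
  by case/orP => H; [exact: (T1c a1 bk H) | exact: (T1c a3 bk H)].
have TG c : c.+1 < m -> (q2.2 <= c) = ~~ (q1.2 <= c) -> TW n k m s.
  move=> cm Ec.
  have := boolB2 (inc n q1.1.1 q3.1.1) (q1.2 <= c) (q3.2 <= c).
  rewrite -C1 -C3 -Ec -/(gp c).
  by case/orP => H; [exact: (T2c a1 cm H) | exact: (T2c a3 cm H)].
case: (ltngtP q1.1.2 q2.1.2) => Hb.
  apply: (TB q1.1.2); first lia.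
  by rewrite leqnn leqNgt Hb.
  apply: (TB q2.1.2); first lia.
  by rewrite leqnn leqNgt Hb.
case: (ltngtP q1.2 q2.2) => Hc.
  apply: (TG q1.2); first lia.
  by rewrite leqnn leqNgt Hc.
  apply: (TG q2.2); first lia.
  by rewrite leqnn leqNgt Hc.
have [ub [ubk Hub]] : exists ub, ub < k /\ (ub = q1.1.2.+1 \/ ub.+1 = q1.1.2).
  case: (ltnP q1.1.2.+1 k) => H; first by exists q1.1.2.+1; split => //; left.
  exists q1.1.2.-1; split; [lia | right; lia].
have [vc [vcm Hvc]] : exists vc, vc < m /\ (vc = q1.2.+1 \/ vc.+1 = q1.2).
  case: (ltnP q1.2.+1 m) => H; first by exists q1.2.+1; split => //; left.
  exists q1.2.-1; split; [lia | right; lia].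
have S1 : sr n h q1.1.1 q1.1.1 by rewrite /sr eqxx.
have S2 : sr n h q1.1.1 q2.1.1 by rewrite /sr E eqxx orbT.
apply: (Rlem (u := (ub, q1.2)) (v := (q1.1.2, vc)) a1) => //=.
- by case; lia.
- rewrite /Gr /absd /=; lia.
- rewrite /Gr /absd /= -Hb -Hc; lia.
- rewrite /Gr /absd /=; lia.
Qed.

Lemma caseB : sr n h q1.1.1 q2.1.1 -> ~~ sr n h q1.1.1 q3.1.1 -> TW n k m s.
Proof.
case/orP => /eqP E S; [exact: caseB1 | exact: caseB2].
Qed.

End T.


Lemma core n h k m : n = h + h -> 2 <= h -> 3 <= k -> 2 <= m ->
  forall q1 q2 q3, inb n k m q1 -> inb n k m q2 -> inb n k m q3 -> TW n k m [:: q1; q2; q3].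
Proof.
move=> Hn Hh Hk Hm q1 q2 q3 B1 B2 B3.
have /and3P [a1 _ _] := B1; have /and3P [a2 _ _] := B2; have /and3P [a3 _ _] := B3.
case: (boolP (sr n h q1.1.1 q2.1.1)) => S12.
  case: (boolP (sr n h q1.1.1 q3.1.1)) => S13.
    exact: (caseC Hn Hh Hk Hm B1 B2 B3 S12 S13).
  exact: (caseB Hn Hh Hk Hm B1 B2 B3 S12 S13).
case: (boolP (sr n h q1.1.1 q3.1.1)) => S13.
  apply: (TW_sub _ (caseB Hn Hh Hk Hm B1 B3 B2 S13 S12)).
  by move=> q; rewrite !inE => /or3P [] ->; rewrite ?orbT.
case: (boolP (sr n h q2.1.1 q3.1.1)) => S23.
  have S21 : ~~ sr n h q2.1.1 q1.1.1 by rewrite (sr_sym Hn Hh a2 a1).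
  apply: (TW_sub _ (caseB Hn Hh Hk Hm B2 B3 B1 S23 S21)).
  by move=> q; rewrite !inE => /or3P [] ->; rewrite ?orbT.
exact: (caseA Hn Hh Hk Hm B1 B2 B3 S12 S13 S23).
Qed.

Lemma dC01 n a a' : 3 <= n -> a < n -> a' < n -> dC n a 0 = dC n a' 0 -> dC n a 1 = dC n a' 1 -> a = a'.
Proof. rewrite /dC /absd; lia. Qed.

Lemma bigmin_le (I : eqType) (r : seq I) (P : pred I) (F : I -> nat) x i :
  i \in r -> P i -> \big[minn/x]_(j <- r | P j) F j <= F i.
Proof.
elim: r => // j r IH; rewrite inE big_cons => /orP [/eqP <-|ir] Pi.
  by rewrite Pi geq_minl.
case: (P j); [exact: leq_trans (geq_minr _ _) (IH ir Pi) | exact: IH].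
Qed.

Lemma sum_le_prod a b : 2 <= a -> 2 <= b -> a + b <= a * b.
Proof. move=> ? ?; nia. Qed.

Unset Implicit Arguments.
Unset Strict Implicit.

Theorem theorem3p4 (n k m : nat) :
  4 <= n -> ~~ odd n -> 3 <= k -> 2 <= m ->
  metric_dim (cart_rel (cart_rel (cycle_rel n) (path_rel k)) (path_rel m)) = 4.
Proof.
move=> n4 nodd k3 m2.
set h := n./2.
have Hn : n = h + h by rewrite /h -{1}(odd_double_half n) (negbTE nodd) add0n -addnn.
have Hh : 2 <= h by lia.
set e := cart_rel (cart_rel (cycle_rel n) (path_rel k)) (path_rel m).
pose F := prodF (prodF (fun x y : 'I_n => dC n x y) (fun x y : 'I_k => absd x y)) (fun x y : 'I_m => absd x y).
have HF : metricF e F.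
  apply: metricF_prod; last exact: metricF_path.
  apply: metricF_prod; last exact: metricF_path.
  apply: metricF_cycle; lia.
have cardT : #|{: ('I_n * 'I_k) * 'I_m}| = n * k * m by rewrite !card_prod !card_ord.
have bigT : n + k + m <= #|{: ('I_n * 'I_k) * 'I_m}|.
  have h1 : k + m <= k * m by apply: sum_le_prod; lia.
  have h2 : n + k * m <= n * (k * m) by apply: sum_le_prod; nia.
  rewrite cardT -mulnA; lia.
have Hd : forall x y, dist e x y = F x y.
  move=> [[x1 x2] x3] [[y1 y2] y3]; apply: (dist_eqF HF); apply: leq_trans bigT.
  have := ltn_ord x1; have := ltn_ord x2; have := ltn_ord x3.
  have := ltn_ord y1; have := ltn_ord y2; have := ltn_ord y3.
  rewrite /F /prodF /= /dC /absd; lia.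
pose tn (x : 'I_n * 'I_k * 'I_m) := (val x.1.1, val x.1.2, val x.2).
have FG x y : F x y = GG n (tn x) (tn y) by [].
have rvP (Q : {set 'I_n * 'I_k * 'I_m}) x y :
    (forall q, q \in Q -> GG n (tn x) (tn q) = GG n (tn y) (tn q)) -> rvec e Q x = rvec e Q y.
  move=> H; apply/eq_in_map => q; rewrite mem_enum => qQ.
  by rewrite !Hd !FG H.
have low (Q : {set 'I_n * 'I_k * 'I_m}) : resolving e Q -> 4 <= #|Q|.
  move=> HQ; rewrite leqNgt; apply/negP => Qs.
  have n0 : 0 < n by lia.
  have k0 : 0 < k by lia.
  have m0 : 0 < m by lia.
  pose x0 := ((Ordinal n0, Ordinal k0), Ordinal m0).
  pose sq := enum Q.
  have sz : size sq <= 3 by rewrite -cardE; lia.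
  have Bq i : inb n k m (tn (nth x0 sq i)).
    by rewrite /inb /= !ltn_ord.
  have [[[xa xb] xc] [[[ya yb] yc] [Bx [By [Nxy Hxy]]]]] :=
    core Hn Hh k3 m2 (Bq 0) (Bq 1) (Bq 2).
  case/and3P: Bx => /= xa' xb' xc'; case/and3P: By => /= ya' yb' yc'.
  pose X := ((Ordinal xa', Ordinal xb'), Ordinal xc').
  pose Y := ((Ordinal ya', Ordinal yb'), Ordinal yc').
  have : rvec e Q X = rvec e Q Y.
    apply: rvP => q qQ.
    have qs : q \in sq by rewrite mem_enum.
    have iq : index q sq < 3 by apply: leq_trans sz; rewrite index_mem.
    have -> : q = nth x0 sq (index q sq) by rewrite nth_index.
    apply: Hxy; move: iq; rewrite !inE.
    by case: (index q sq) => [|[|[|i]]] //= _; rewrite eqxx ?orbT.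
  move/eqP => HXY.
  have := HQ; move/forallP/(_ X)/forallP/(_ Y); rewrite HXY /= => /eqP EXY.
  by apply: Nxy; have := congr1 tn EXY.
have n0 : 0 < n by lia.
have n1 : 1 < n by lia.
have k0 : 0 < k by lia.
have k1 : k.-1 < k by lia.
have m0 : 0 < m by lia.
have m1 : m.-1 < m by lia.
pose v1 := ((Ordinal n0, Ordinal k0), Ordinal m0).
pose v2 := ((Ordinal n0, Ordinal k0), Ordinal m1).
pose v3 := ((Ordinal n0, Ordinal k1), Ordinal m0).
pose v4 := ((Ordinal n1, Ordinal k0), Ordinal m0).
pose Q0 := [set x in [:: v1; v2; v3; v4]].
have RQ0 : resolving e Q0.
  apply/forallP => -[[a b] c]; apply/forallP => -[[a' b'] c']; apply/implyP => /eqP H.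
  move/eq_in_map: H => H.
  have G q : q \in [:: v1; v2; v3; v4] -> GG n (tn ((a, b), c)) (tn q) = GG n (tn ((a', b'), c')) (tn q).
    by move=> qs; rewrite -!FG -!Hd; apply: H; rewrite mem_enum inE.
  have := G v1; have := G v2; have := G v3; have := G v4.
  rewrite !inE !eqxx ?orbT /GG /tn /= => E4 E3 E2 E1.
  have := E1 erefl; have := E2 erefl; have := E3 erefl; have := E4 erefl => {E1 E2 E3 E4 G H}.
  have := ltn_ord a; have := ltn_ord b; have := ltn_ord c.
  have := ltn_ord a'; have := ltn_ord b'; have := ltn_ord c'.
  move=> ? ? ? ? ? ?.
  have ab0 x : absd x 0 = x by rewrite /absd; lia.
  have abl x y : x <= y -> absd x y = y - x by rewrite /absd; lia.
  rewrite !ab0 !(abl c) ?(abl c') ?(abl b) ?(abl b'); try lia.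
  move=> E4 E3 E2 E1.
  have Ec : c = c' :> nat by lia.
  have Eb : b = b' :> nat by lia.
  have Ea : a = a' :> nat by apply: (dC01 (n := n)); lia.
  by rewrite (val_inj Ea) (val_inj Eb) (val_inj Ec).
have cQ0 : #|Q0| <= 4 by rewrite cardsE; apply: card_size.
rewrite /metric_dim; apply/eqP; rewrite eqn_leq; apply/andP; split.
  apply: leq_trans cQ0; apply: bigmin_le => //; exact: mem_index_enum.
apply: (big_ind (fun v => 4 <= v)).
- apply: leq_trans bigT; lia.
- by move=> x y hx hy; rewrite leq_min hx hy.
- exact: low.
Qed.
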